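(* In the nonatomic base station association game with cost densities $c_{lj}(\mathbf{m})=g_{lj}c(m_j)$, suppose $h_{lj}=h$ for all $l\in\mathcal{L}$, $j\in\mathcal{N}$ (for a constant $h>0$). Then every Nash equilibrium is system optimal, i.e., minimizes $C(\mathbf{m})=\sum_{j\in\mathcal{N}}\sum_{l=1}^L m_{lj}g_{lj}c(m_j)$ over all congestion profiles.
   Context: Nonatomic model: classes $\mathcal{L}=\{1,\dots,L\}$ of nonatomic mobiles, class $l$ having total mass $M_l>0$, target SINR density $\gamma_l>0$ and power gain $h_{lj}>0$ to BS $j\in\mathcal{N}=\{1,\dots,N\}$; noise power $\sigma^2>0$. A congestion profile is $\mathbf{m}=(m_{lj})$ with $m_{lj}\ge0$, $\sum_j m_{lj}=M_l$. Set $m_j=\sum_l\gamma_l m_{lj}$, $g_{lj}=\gamma_l\sigma^2/h_{lj}$, and $c(z)=1/(1-z)$ for $z<1$, $c(z)=\infty$ for $z\ge1$; $c_{lj}(\mathbf{m})=g_{lj}c(m_j)$. $\mathbf{m}$ is a Nash equilibrium if for all $l,j$, $m_{lj}>0$ implies $c_{lj}(\mathbf{m})\le c_{lk}(\mathbf{m})$ for all $k$. Standing feasibility assumption: $\sum_l\gamma_l M_l<N$. *)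

(* Defs.v *)
From HB Require Import structures.
From mathcomp Require Import all_boot all_order all_algebra.
From mathcomp Require Import reals constructive_ereal.
Set Implicit Arguments. Unset Strict Implicit. Unset Printing Implicit Defensive.
Import Order.TTheory GRing.Theory Num.Theory.
Local Open Scope ring_scope.
Local Open Scope ereal_scope.

(* Nonatomic base station association game.
   Classes are 'I_L, base stations are 'I_N. *)
Section BSGame.
Variables (R : realType) (L N : nat).

Definition ccost (z : R) : \bar R :=
  if (z < 1)%R then ((1 - z)^-1)%:E else +oo.

Definition is_profile (M : 'I_L -> R) (m : 'I_L -> 'I_N -> R) : Prop :=
  (forall l j, (0 <= m l j)%R) /\ (forall l, (\sum_(j < N) m l j)%R = M l).

Definition load (gamma : 'I_L -> R) (m : 'I_L -> 'I_N -> R) (j : 'I_N) : R :=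
  (\sum_(l < L) gamma l * m l j)%R.

Definition gcoef (gamma : 'I_L -> R) (sigma2 : R) (h : 'I_L -> 'I_N -> R)
  (l : 'I_L) (j : 'I_N) : R := (gamma l * sigma2 / h l j)%R.

Definition cdens gamma sigma2 h (m : 'I_L -> 'I_N -> R) l j : \bar R :=
  (gcoef gamma sigma2 h l j)%:E * ccost (load gamma m j).

Definition is_NE gamma sigma2 h (m : 'I_L -> 'I_N -> R) : Prop :=
  forall l j, (0 < m l j)%R ->
    forall k, cdens gamma sigma2 h m l j <= cdens gamma sigma2 h m l k.

Definition total_cost gamma sigma2 h (m : 'I_L -> 'I_N -> R) : \bar R :=
  \sum_(j < N) \sum_(l < L)
     (m l j * gcoef gamma sigma2 h l j)%:E * ccost (load gamma m j).

End BSGame.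

(* Main.v *)
Require Import Defs.
From HB Require Import structures.
From mathcomp Require Import all_boot all_order all_algebra.
From mathcomp Require Import reals constructive_ereal.
From mathcomp Require Import ring lra.
Import Order.TTheory GRing.Theory Num.Theory.
Local Open Scope ring_scope.

Lemma term_eq (R : realType) (L N : nat) (gamma : 'I_L -> R) (sigma2 h0 : R)
  (h : 'I_L -> 'I_N -> R) (m : 'I_L -> 'I_N -> R) (j : 'I_N) :
  0 < h0 -> (forall l j, h l j = h0) -> 0 <= sigma2 ->
  (forall l, 0 < gamma l) -> (forall l, 0 <= m l j) ->
  (\sum_(l < L) (m l j * gcoef gamma sigma2 h l j)%:E * ccost (load gamma m j))%E
  = ((sigma2 / h0 * load gamma m j)%:E * ccost (load gamma m j))%E.
Proof.
move=> h0p hE s0 g0 m0.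
rewrite -ge0_sume_distrl; last first.
  move=> l _; rewrite lee_fin /gcoef hE.
  apply: mulr_ge0 => //; apply: mulr_ge0; [apply: mulr_ge0 => //; exact: ltW|].
  by rewrite invr_ge0 ltW.
rewrite sumEFin; congr (_%:E * _)%E.
rewrite /load mulr_sumr; apply: eq_bigr => l _; rewrite /gcoef hE; ring.
Qed.

Theorem proposition11 (R : realType) (L N : nat)
  (M gamma : 'I_L -> R) (h : 'I_L -> 'I_N -> R) (sigma2 h0 : R) :
  (forall l, 0 < M l) -> (forall l, 0 < gamma l) -> 0 < sigma2 ->
  \sum_(l < L) gamma l * M l < N%:R ->
  0 < h0 -> (forall l j, h l j = h0) ->
  forall m : 'I_L -> 'I_N -> R,
    is_profile M m -> is_NE gamma sigma2 h m ->
    forall m' : 'I_L -> 'I_N -> R, is_profile M m' ->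
      (total_cost gamma sigma2 h m <= total_cost gamma sigma2 h m')%E.
Proof.
move=> M0 g0 s0 SN h0p hE m [m0 mM] NE m' [m'0 m'M].
set k := sigma2 / h0.
have k0 : 0 < k by rewrite /k divr_gt0.
have sumload : forall mm : 'I_L -> 'I_N -> R, (forall l, \sum_(j < N) mm l j = M l) ->
   \sum_(j < N) load gamma mm j = \sum_(l < L) gamma l * M l.
  move=> mm mmM; rewrite /load exchange_big /=; apply: eq_bigr => l _.
  by rewrite -mulr_sumr mmM.
have load0 : forall mm : 'I_L -> 'I_N -> R, (forall l j, 0 <= mm l j) ->
   forall j, 0 <= load gamma mm j.
  move=> mm mm0 j; apply: sumr_ge0 => l _; apply: mulr_ge0 => //; exact: ltW.
have TC : forall mm : 'I_L -> 'I_N -> R, (forall l j, 0 <= mm l j) ->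
   total_cost gamma sigma2 h mm =
   (\sum_(j < N) ((k * load gamma mm j)%:E * ccost (load gamma mm j)))%E.
  move=> mm mm0; rewrite /total_cost; apply: eq_bigr => j _.
  by apply: term_eq => //; exact: ltW.
rewrite (TC _ m0) (TC _ m'0).
case: N SN h hE m m' NE m0 mM m'0 m'M sumload load0 TC => [|n] SN h hE m m' NE m0 mM m'0 m'M sumload load0 TC.
  by rewrite !big_ord0.
set lam := load gamma m [arg min_(j < ord0) load gamma m j]%O.
have lammin : forall j, lam <= load gamma m j.
  rewrite /lam; case: arg_minP => //= i _ H j; exact: H.
have lam0 : 0 <= lam by exact: load0.
have lam1 : lam < 1.
  have : n.+1%:R * lam <= \sum_(l < L) gamma l * M l.
    rewrite -(sumload _ mM) (_ : _ * lam = \sum_(j < n.+1) lam); last first.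
      by rewrite sumr_const card_ord mulr_natl.
    by apply: ler_sum => j _.
  move=> H; have := le_lt_trans H SN.
  by rewrite -[X in _ < X]mulr1 ltr_pM2l // ltr0n.
have ccE : forall z : R, z < 1 -> ccost z = ((1 - z)^-1)%:E.
  by move=> z z1; rewrite /ccost z1.
have loadE : forall j, load gamma m j = lam.
  move=> j; apply/eqP; rewrite eq_le lammin andbT.
  have [lj0|ljp] := eqVneq (load gamma m j) 0.
    by rewrite lj0.
  have : exists l, 0 < m l j.
    apply/existsP; apply: contraNT ljp; rewrite negb_exists => /forallP H.
    apply/eqP; rewrite /load; apply: big1 => l _.
    have : ~~ (0 < m l j) by exact: H.
    by rewrite lt_def negb_and negbK (m0 l j) orbF => /eqP ->; rewrite mulr0.
  case=> l ml.
  set i0 := [arg min_(j < ord0) load gamma m j]%O.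
  have := NE l j ml i0; rewrite /cdens -/lam (ccE lam) // /gcoef !hE.
  have gk : 0 < gamma l * sigma2 / h0 by rewrite !mulr_gt0 ?invr_gt0.
  rewrite /ccost; case: ifP => lj1; last first.
    by rewrite mulry gtr0_sg // mul1e leye_eq.
  rewrite lee_fin ler_pM2l // lef_pV2 ?posrE ?subr_gt0 //.
  by rewrite lerD2l lerN2.
set A := k * (lam / (1 - lam) - lam / (1 - lam) ^+ 2).
set B := k / (1 - lam) ^+ 2.
have key : forall z : R, 0 <= z -> ((A + B * z)%:E <= (k * z)%:E * ccost z)%E.
  move=> z z0; rewrite /ccost; case: ifP => z1; last first.
    have zp : 0 < k * z by rewrite mulr_gt0 // (lt_le_trans ltr01) // leNgt z1.
    by rewrite mulry gtr0_sg // mul1e leey.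
  rewrite -EFinM lee_fin.
  have l1 : 0 < 1 - lam by rewrite subr_gt0.
  have z1' : 0 < 1 - z by rewrite subr_gt0.
  rewrite -subr_ge0.
  have -> : k * z * (1 - z)^-1 - (A + B * z) =
     k * ((z - lam) ^+ 2 / ((1 - lam) ^+ 2 * (1 - z))).
    rewrite /A /B; field.
    by rewrite !gt_eqF.
  apply: mulr_ge0; first exact: ltW.
  apply: divr_ge0; first exact: sqr_ge0.
  by apply: mulr_ge0; [apply: sqr_ge0|exact: ltW].
have eqm : (\sum_(j < n.+1) ((k * load gamma m j)%:E * ccost (load gamma m j)))%E
   = (\sum_(j < n.+1) (A + B * load gamma m j)%:E)%E.
  apply: eq_bigr => j _; rewrite loadE ccE // -EFinM; congr _%:E.
  have l1 : 0 < 1 - lam by rewrite subr_gt0.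
  rewrite /A /B; field; rewrite gt_eqF //.
rewrite eqm.
apply: (@le_trans _ _ (\sum_(j < n.+1) (A + B * load gamma m' j)%:E)%E); last first.
  by apply: lee_sum => j _; apply: key; exact: load0.
rewrite !sumEFin lee_fin !big_split /= -!mulr_sumr sumload // sumload //.
Qed.
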